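(* Let $p$ be a pattern graph, $d$ a data graph and $V_c(p)$ a vertex cover of $p$, and assume $M(p,d)\neq\emptyset$. Let $R=S_{plain}/S_{comp}$ be the compression ratio, where $S_{plain}=|V(p)|\cdot|M(p,d)|$ and $S_{comp}=\sum_{s}\mathrm{size}(f|s)$, the sum ranging over all skeletons $s:V_c(p)\to V(d)$ with $M|s\neq\emptyset$. Then $$R\ \ge\ \frac{|V(p)|\cdot |M(p,d)|}{|V(p)|\cdot |M(p,d)| + |V_c(p)|\cdot \big(|M(p[V_c(p)],d)| - |M(p,d)|\big)}.$$
   Context: Graphs are finite, simple and undirected. $p$ (the pattern) and $d$ (the data graph) are graphs, the vertices of $d$ carry a fixed total order, and $\mathbf{ord}$ is a set of ordered pairs of vertices of $p$ (a symmetry-breaking partial order). For a subgraph $p'$ of $p$, a match of $p'$ in $d$ is an injective map $f:V(p')\to V(d)$ such that $(f(x),f(y))\in E(d)$ for every edge $(x,y)\in E(p')$ and $f(x)<f(y)$ for every $(x,y)\in\mathbf{ord}$ with $x,y\in V(p')$; $M(p',d)$ denotes the set of matches of $p'$ in $d$. A vertex cover of $p$ is a set $V_c(p)\subseteq V(p)$ containing at least one endpoint of every edge of $p$, and $p[V_c(p)]$ is the subgraph of $p$ induced on $V_c(p)$. For a skeleton $s:V_c(p)\to V(d)$, $M|s=\{f\in M(p,d): f|_{V_c(p)}=s\}$. Storage model: each vertex occupies one integer. The compressed form $f|s$ of $M|s$ stores $s$ ($|V_c(p)|$ integers) and, for each $v\in V(p)\setminus V_c(p)$, the set $f|s(v)=\{f(v):f\in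 M|s\}$ ($|f|s(v)|$ integers), so $\mathrm{size}(f|s)=|V_c(p)|+\sum_{v\in V(p)\setminus V_c(p)}|f|s(v)|$. *)

(* Defs.v *)
From mathcomp Require Import all_boot all_order all_algebra.
Set Implicit Arguments. Unset Strict Implicit. Unset Printing Implicit Defensive.
Import Order.TTheory GRing.Theory Num.Theory.

Definition simple_graph (T : finType) (e : rel T) : Prop :=
  (forall x y, e x y = e y x) /\ (forall x, ~~ e x x).

(* Pattern p = (P, ep); data graph d = ('I_n, ed), whose vertices carry the
   fixed total order of 'I_n (natural order); ord : rel P is the
   symmetry-breaking set of ordered pairs. *)

Definition vertex_cover (P : finType) (ep : rel P) (Vc : {set P}) : Prop :=
  forall x y, ep x y -> (x \in Vc) || (y \in Vc).

Definition is_match (P : finType) (ep : rel P) (ord : rel P) (n : nat)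
    (ed : rel 'I_n) (f : {ffun P -> 'I_n}) : bool :=
  [&& injectiveb f,
      [forall x, forall y, ep x y ==> ed (f x) (f y)] &
      [forall x, forall y, ord x y ==> (f x < f y)%N]].

Definition matches (P : finType) (ep ord : rel P) (n : nat) (ed : rel 'I_n)
  : {set {ffun P -> 'I_n}} := [set f | is_match ep ord ed f].

Definition sub_vert (P : finType) (S : {set P}) := {x : P | x \in S}.

(* Matches of the induced subgraph p[S]: edges and ord-pairs among S. *)
Definition is_match_sub (P : finType) (ep ord : rel P) (S : {set P}) (n : nat)
    (ed : rel 'I_n) (f : {ffun sub_vert S -> 'I_n}) : bool :=
  [&& injectiveb f,
      [forall x, forall y, ep (val x) (val y) ==> ed (f x) (f y)] &
      [forall x, forall y, ord (val x) (val y) ==> (f x < f y)%N]].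

Definition matches_sub (P : finType) (ep ord : rel P) (S : {set P}) (n : nat)
    (ed : rel 'I_n) : {set {ffun sub_vert S -> 'I_n}} :=
  [set f | is_match_sub ep ord ed f].

Definition restrict (P : finType) (S : {set P}) (n : nat) (f : {ffun P -> 'I_n})
  : {ffun sub_vert S -> 'I_n} := [ffun x => f (val x)].

Definition matches_given (P : finType) (ep ord : rel P) (Vc : {set P}) (n : nat)
    (ed : rel 'I_n) (s : {ffun sub_vert Vc -> 'I_n}) : {set {ffun P -> 'I_n}} :=
  [set f in matches ep ord ed | restrict Vc f == s].

Definition comp_size (P : finType) (ep ord : rel P) (Vc : {set P}) (n : nat)
    (ed : rel 'I_n) (s : {ffun sub_vert Vc -> 'I_n}) : nat :=
  #|Vc| + \sum_(v in ~: Vc) #|[set (f : {ffun P -> 'I_n}) v | f in matches_given ep ord ed s]|.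

Definition S_plain (P : finType) (ep ord : rel P) (n : nat) (ed : rel 'I_n) : nat :=
  #|P| * #|matches ep ord ed|.

Definition S_comp (P : finType) (ep ord : rel P) (Vc : {set P}) (n : nat)
    (ed : rel 'I_n) : nat :=
  \sum_(s : {ffun sub_vert Vc -> 'I_n} | matches_given ep ord ed s != set0)
     comp_size ep ord ed s.

Definition compression_ratio (P : finType) (ep ord : rel P) (Vc : {set P})
    (n : nat) (ed : rel 'I_n) : rat :=
  ((S_plain ep ord ed)%:R / (S_comp ep ord Vc ed)%:R)%R.

(* Main.v *)
Require Import Defs.
From mathcomp Require Import all_boot all_order all_algebra.
From mathcomp Require Import ring.
Import Order.TTheory GRing.Theory Num.Theory.

Section Aux.
Variables (P : finType) (ep ord : rel P) (n : nat) (ed : rel 'I_n) (Vc : {set P}).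

Lemma restrict_match f : f \in matches ep ord ed ->
  restrict Vc f \in matches_sub ep ord Vc ed.
Proof.
rewrite !inE /is_match /is_match_sub => /and3P [/injectiveP inj /forallP E /forallP O].
apply/and3P; split.
- apply/injectiveP => x y; rewrite !ffunE => /inj /val_inj; done.
- apply/forallP => x; apply/forallP => y; rewrite !ffunE.
  exact: (forallP (E (val x)) (val y)).
- apply/forallP => x; apply/forallP => y; rewrite !ffunE.
  exact: (forallP (O (val x)) (val y)).
Qed.

Lemma sum_given :
  \sum_(s : {ffun sub_vert Vc -> 'I_n} | matches_given ep ord ed s != set0)
     #|matches_given ep ord ed s| = #|matches ep ord ed|.
Proof.
rewrite -[RHS]sum1_card (partition_big (@restrict P Vc n) predT) //.
rewrite [LHS]big_mkcond /=; apply: eq_bigr => s _.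
idtac.
rewrite sum1_card.
have -> : #|[pred i | (i \in matches ep ord ed) && (restrict Vc i == s)]|
   = #|matches_given ep ord ed s|.
  by apply: eq_card => f; rewrite /matches_given inE.
by case: ifP => // /negbFE /eqP ->; rewrite cards0.
Qed.

Lemma comp_size_le (s : {ffun sub_vert Vc -> 'I_n}) :
  (comp_size ep ord ed s <= #|Vc| + (#|P| - #|Vc|) * #|matches_given ep ord ed s|)%N.
Proof.
rewrite /comp_size leq_add2l.
apply: (@leq_trans (\sum_(v in ~: Vc) #|matches_given ep ord ed s|)).
  by apply: leq_sum => v _; apply: leq_imset_card.
rewrite sum_nat_const.
have -> : #|~: Vc| = (#|P| - #|Vc|)%N.
  by rewrite [LHS]cardsCs setCK.
by [].
Qed.

Lemma S_comp_le :
  (S_comp ep ord Vc ed <= #|Vc| * #|matches_sub ep ord Vc ed|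
     + (#|P| - #|Vc|) * #|matches ep ord ed|)%N.
Proof.
rewrite /S_comp.
apply: (@leq_trans (\sum_(s : {ffun sub_vert Vc -> 'I_n} | matches_given ep ord ed s != set0)
     (#|Vc| + (#|P| - #|Vc|) * #|matches_given ep ord ed s|))).
  by apply: leq_sum => s _; apply: comp_size_le.
rewrite big_split /= -big_distrr /= sum_given leq_add2r.
rewrite sum_nat_const mulnC leq_mul2l; apply/orP; right.
apply: subset_leq_card; apply/subsetP => s; rewrite inE => /set0Pn [f].
rewrite /matches_given inE => /andP [fM /eqP <-].
by have := restrict_match f fM; rewrite inE.
Qed.

Lemma S_comp_pos : (0 < #|P|)%N -> matches ep ord ed != set0 ->
  (0 < S_comp ep ord Vc ed)%N.
Proof.
move=> P0 /set0Pn [f fM].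
rewrite /S_comp (bigD1 (@restrict P Vc n f)) /=; last first.
  by apply/set0Pn; exists f; rewrite /matches_given inE fM eqxx.
rewrite ltn_addr // /comp_size.
case: (posnP #|Vc|) => [V0|]; last by move=> h; rewrite ltn_addr.
rewrite V0 add0n.
have [v _] : exists v : P, true.
  by move/card_gt0P: P0 => [v _]; exists v.
rewrite (bigD1 v) /=; last first.
  by rewrite (cards0_eq V0) setC0 inE.
rewrite ltn_addr // card_gt0; apply/set0Pn; exists (f v).
by apply/imsetP; exists f => //; rewrite /matches_given inE fM eqxx.
Qed.

End Aux.

Local Open Scope ring_scope.

Theorem mainTheorem2 (P : finType) (ep ord : rel P) (n : nat) (ed : rel 'I_n)
    (Vc : {set P}) :
  simple_graph ep -> simple_graph ed -> vertex_cover ep Vc ->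
  matches ep ord ed != set0 ->
  ((#|P| * #|matches ep ord ed|)%:R /
     ((#|P| * #|matches ep ord ed|)%:R
      + (#|Vc|)%:R * ((#|matches_sub ep ord Vc ed|)%:R
                      - (#|matches ep ord ed|)%:R)) : rat)
  <= compression_ratio ep ord Vc ed.
Proof.
move=> _ _ _ Mne.
rewrite /compression_ratio /S_plain.
have kN : (#|Vc| <= #|P|)%N by apply: max_card.
have -> : ((#|P| * #|matches ep ord ed|)%:R
      + (#|Vc|)%:R * ((#|matches_sub ep ord Vc ed|)%:R
                      - (#|matches ep ord ed|)%:R) : rat)
  = (#|Vc| * #|matches_sub ep ord Vc ed|
     + (#|P| - #|Vc|) * #|matches ep ord ed|)%N%:R.
  rewrite natrD !natrM natrB //; ring.
case: (posnP #|P|) => [->|P0]; first by rewrite mul0n !mul0r.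
have Spos := @S_comp_pos P ep ord n ed Vc P0 Mne.
have Sle := @S_comp_le P ep ord n ed Vc.
move: Spos Sle.
move: (S_comp ep ord Vc ed) (#|Vc| * #|matches_sub ep ord Vc ed| + (#|P| - #|Vc|) * #|matches ep ord ed|)%N (#|P| * #|matches ep ord ed|)%N => S D A Spos Sle.
have D0 : (0 < D)%N by exact: leq_trans Spos Sle.
apply: ler_wpM2l; first by rewrite ler0n.
by rewrite lef_pV2 ?posrE ?ltr0n ?ler_nat //.
Qed.
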